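(* Let $F$ be a simple signed graph with at least two edges that has a signed perfect elimination ordering. Then the skeleton (graph of vertices and edges) of the signed graphic zonotope of $F$ has a Hamiltonian cycle.
   Context: A signed graph is a simple graph $F=([n],E)$ together with a partition $E=E^+\cup E^-$ into positive and negative edges. Its signed graphic arrangement $\mathcal{H}(F)$ in $\mathbb{R}^n$ consists of the hyperplanes with normal vectors $e_i-e_j$ for $\{i,j\}\in E^+$ and $e_i+e_j$ for $\{i,j\}\in E^-$ ($e_i$ the standard basis vectors). The signed graphic zonotope of $F$ is the Minkowski sum of the line segments $[-v,v]$ over the normal vectors $v$ of the hyperplanes of $\mathcal{H}(F)$. A vertex $v$ of $F$ is signed simplicial if for any two distinct neighbors $x,y$ of $v$: if $\{v,x\},\{v,y\}$ are both in $E^+$ or both in $E^-$, then $\{x,y\}\in E^+$; and if $\{v,x\}\in E^+$ and $\{v,y\}\in E^-$, then $\{x,y\}\in E^-$. An ordering $v_1,\dots,v_n$ of the vertices is a signed perfect elimination ordering if for each $i$, $v_i$ is signed simplicial in the signed graph obtained from $F$ by deleting $v_1,\dots,v_{i-1}$. *)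

(* Defs.v *)
From HB Require Import structures.
From mathcomp Require Import all_boot all_order all_algebra.
From mathcomp Require Import reals.
Set Implicit Arguments. Unset Strict Implicit. Unset Printing Implicit Defensive.
Import Order.TTheory GRing.Theory Num.Theory.
Local Open Scope ring_scope.

(* A signed graph on vertex set 'I_n is given by two relations [pos] and
   [neg] (positive / negative edges), which are symmetric, irreflexive and
   disjoint (E = E^+ \cup E^- is a partition of the edge set of a simple graph). *)
Definition signed_graph (n : nat) (pos neg : rel 'I_n) : Prop :=
  [/\ symmetric pos, symmetric neg,
      (forall i, ~~ pos i i), (forall i, ~~ neg i i)
    & (forall i j, ~~ (pos i j && neg i j))].

Definition sg_edges (n : nat) (pos neg : rel 'I_n) : {set 'I_n * 'I_n} :=
  [set p : 'I_n * 'I_n | (p.1 < p.2)%N && (pos p.1 p.2 || neg p.1 p.2)].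

Definition signed_simplicial (n : nat) (pos neg : rel 'I_n) (S : {set 'I_n})
    (v : 'I_n) : Prop :=
  v \in S /\
  forall x y, x \in S -> y \in S -> x != y -> x != v -> y != v ->
    ((pos v x && pos v y) || (neg v x && neg v y) -> pos x y) /\
    (pos v x && neg v y -> neg x y).

Definition signed_PEO (n : nat) (pos neg : rel 'I_n) (s : seq 'I_n) : Prop :=
  perm_eq s (enum 'I_n) /\
  forall (s1 s2 : seq 'I_n) (v : 'I_n), s = s1 ++ v :: s2 ->
    signed_simplicial pos neg [set x | x \notin s1] v.

Section Zonotope.
Variable R : realType.
Variable n : nat.

Definition dotv (c x : 'rV[R]_n) : R := \sum_(i < n) c 0 i * x 0 i.

Definition unitv (i : 'I_n) : 'rV[R]_n := delta_mx 0 i.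

(* Signed graphic zonotope: Minkowski sum of the segments [-v, v] over the
   normal vectors v = e_i - e_j ({i,j} in E^+) and v = e_i + e_j ({i,j} in E^-),
   each unordered edge counted once (as i < j). *)
Definition signed_zonotope (pos neg : rel 'I_n) (x : 'rV[R]_n) : Prop :=
  exists tp tn : 'I_n -> 'I_n -> R,
    (forall i j, -1 <= tp i j <= 1) /\ (forall i j, -1 <= tn i j <= 1) /\
    x = \sum_(i < n) \sum_(j < n | (i < j)%N && pos i j)
            tp i j *: (unitv i - unitv j)
      + \sum_(i < n) \sum_(j < n | (i < j)%N && neg i j)
            tn i j *: (unitv i + unitv j).

Definition poly_vertex (P : 'rV[R]_n -> Prop) (x : 'rV[R]_n) : Prop :=
  P x /\ exists c, forall y, P y -> y != x -> dotv c y < dotv c x.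

Definition poly_edge (P : 'rV[R]_n -> Prop) (x y : 'rV[R]_n) : Prop :=
  [/\ x != y, poly_vertex P x, poly_vertex P y &
    exists c, [/\ forall z, P z -> dotv c z <= dotv c x,
                  dotv c y = dotv c x &
                  forall z, P z -> dotv c z = dotv c x ->
                    exists l : R, 0 <= l <= 1 /\ z = (1 - l) *: x + l *: y]].

Definition skeleton_hamiltonian (P : 'rV[R]_n -> Prop) : Prop :=
  exists s : seq 'rV[R]_n,
    [/\ uniq s, (3 <= size s)%N,
        (forall x, poly_vertex P x <-> x \in s) &
        forall k, (k < size s)%N ->
          poly_edge P (nth 0 s k) (nth 0 s (k.+1 %% size s))].

End Zonotope.

(* Main.v *)
Require Import Defs.
From HB Require Import structures.
From mathcomp Require Import all_boot all_order all_algebra.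
From mathcomp Require Import reals.
From mathcomp Require Import zify ring lra.
Set Implicit Arguments. Unset Strict Implicit. Unset Printing Implicit Defensive.
Import Order.TTheory GRing.Theory Num.Theory.
Local Open Scope ring_scope.

Section Comb.
Variable R : realType.
Variable n : nat.
Variables pos neg : rel 'I_n.
Hypothesis psym : symmetric pos.
Hypothesis nsym : symmetric neg.
Hypothesis pirr : forall i, ~~ pos i i.
Hypothesis nirr : forall i, ~~ neg i i.
Hypothesis pndis : forall i j, ~~ (pos i j && neg i j).

Definition EE := sg_edges pos neg.
Definition lf (w : 'I_n -> R) (e : 'I_n * 'I_n) : R :=
  if pos e.1 e.2 then w e.1 - w e.2 else w e.1 + w e.2.
Definition ES (S : {set 'I_n}) := [set e in EE | (e.1 \in S) && (e.2 \in S)].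
Definition gen S w := forall e, e \in ES S -> lf w e != 0.
Definition DD S (w w' : 'I_n -> R) :=
  [set e in ES S | (0 < lf w e) != (0 < lf w' e)].

Lemma lf_ext w1 w2 e : (forall x, w1 x = w2 x) -> lf w1 e = lf w2 e.
Proof. by move=> h; rewrite /lf !h. Qed.

Lemma DD_ext S w1 w2 w : (forall x, w1 x = w2 x) -> DD S w1 w = DD S w2 w.
Proof. by move=> h; apply/setP=> e; rewrite !inE (lf_ext e h). Qed.

Lemma memDD S w w' e :
  (e \in DD S w w') = (e \in ES S) && ((0 < lf w e) != (0 < lf w' e)).
Proof. by rewrite /DD in_set. Qed.

Lemma DD_sym S w w' : DD S w w' = DD S w' w.
Proof. by apply/setP=> e; rewrite !inE; case: (0 < lf w e); case: (0 < lf w' e). Qed.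

Lemma DD_refl S w : DD S w w = set0.
Proof. by apply/setP=> e; rewrite !inE eqxx andbF. Qed.

Definition nthL (L : seq ('I_n -> R)) i := nth (fun _ => 0) L i.

Record claim (S : {set 'I_n}) (L : seq ('I_n -> R)) : Prop := Claim {
  cl_gen : forall i, (i < size L)%N -> gen S (nthL L i);
  cl_cov : forall w, gen S w -> exists2 i, (i < size L)%N & DD S w (nthL L i) = set0;
  cl_uniq : forall i j, (i < size L)%N -> (j < size L)%N ->
     DD S (nthL L i) (nthL L j) = set0 -> i = j;
  cl_adj : forall i, (i.+1 < size L)%N -> #|DD S (nthL L i) (nthL L i.+1)| = 1%N;
  cl_cyc : (1 < size L)%N -> #|DD S (nthL L (size L).-1) (nthL L 0)| = 1%N;
  cl_sz : (#|ES S| < size L)%N;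
  cl_par : size L = 1%N \/ ~~ odd (size L)
}.

Lemma claim0 S : ES S = set0 -> claim S [:: fun _ => 0].
Proof.
move=> h; split => //=.
- by move=> i _ e; rewrite h inE.
- by move=> w _; exists 0%N => //; apply/setP=> e; rewrite /DD h !inE.
- by move=> [|i] [|j].
- by rewrite h cards0.
- by left.
Qed.

Section Step.
Variables (S' : {set 'I_n}) (v : 'I_n).
Hypothesis vS : v \notin S'.
Hypothesis simp : signed_simplicial pos neg (v |: S') v.

Definition Nv := [set x in S' | pos v x || neg v x].
Definition bp (w : 'I_n -> R) x := if pos v x then w x else - w x.
Definition upd (w : 'I_n -> R) (t : R) := fun x => if x == v then t else w x.
Definition ed (x : 'I_n) := if (v < x)%N then (v, x) else (x, v).

Lemma Nv_neq x : x \in Nv -> x != v.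
Proof. by rewrite inE => /andP[xS _]; apply: contraNneq vS => <-. Qed.

Lemma ed_inj : injective ed.
Proof.
move=> x y; rewrite /ed; case: (ltnP v x) => hx; case: (ltnP v y) => hy;
  move=> h; have /= h1 := congr1 fst h; have /= h2 := congr1 snd h;
  subst => //; by rewrite ltnn in hx hy.
Qed.

Lemma mem_ed e : (e \in ed @: Nv) =
  ((e.1 == v) && (e.2 \in Nv) && (v < e.2)%N) ||
  ((e.2 == v) && (e.1 \in Nv) && (e.1 < v)%N).
Proof.
case: e => a b /=; apply/imsetP/idP.
- case=> x xN; rewrite /ed; case: ltnP => h [-> ->]; rewrite eqxx xN /= ?h //.
  apply/orP; right; rewrite ltn_neqAle h andbT; apply/negP=> /eqP hx.
  by move: (Nv_neq xN); rewrite -(inj_eq val_inj) /= hx eqxx.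
- case/orP => /andP[/andP[/eqP h1 h2] h3].
  + by exists b => //; rewrite /ed h3 h1.
  + by exists a => //; rewrite /ed ltnNge (ltnW h3) h1.
Qed.

Lemma ES_split : ES (v |: S') = ES S' :|: ed @: Nv.
Proof.
apply/setP => -[a b]; rewrite !inE mem_ed /EE /sg_edges !inE /=.
case: (eqVneq a v) => [->|hav]; case: (eqVneq b v) => [->|hbv] /=.
- by rewrite !ltnn /= !andbF.
- rewrite (negbTE vS).
  by case: (v < b)%N; case: (pos v b || neg v b); case: (b \in S').
- rewrite (negbTE vS) [pos a v]psym [neg a v]nsym.
  by case: (a < v)%N; case: (pos v a || neg v a); case: (a \in S').
- by rewrite orbF.
Qed.

Lemma ES_disj : [disjoint ES S' & ed @: Nv].
Proof.
rewrite disjoints_subset; apply/subsetP => -[a b]; rewrite !inE mem_ed /=.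
case/andP=> _ /andP[aS bS]; apply/negP; case/orP => /andP[/andP[/eqP h _] _]; move: vS.
- by rewrite -h aS.
- by rewrite -h bS.
Qed.


Lemma card_disjU (T : finType) (A B : {set T}) :
  [disjoint A & B] -> #|A :|: B| = (#|A| + #|B|)%N.
Proof. by move=> d; rewrite -cardsUI (disjoint_setI0 d) cards0 addn0. Qed.

Lemma ES_card : #|ES (v |: S')| = (#|ES S'| + #|Nv|)%N.
Proof. by rewrite ES_split card_disjU ?ES_disj // (card_imset _ ed_inj). Qed.

Lemma ES_sub : ES S' \subset ES (v |: S').
Proof. by rewrite ES_split subsetUl. Qed.

Lemma ed_in x : x \in Nv -> ed x \in ES (v |: S').
Proof. by move=> xN; rewrite ES_split inE; apply/orP; right; apply: imset_f. Qed.

Lemma lf_upd_old w t e : e \in ES S' -> lf (upd w t) e = lf w e.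
Proof.
rewrite inE => /andP[_ /andP[h1 h2]].
have n1 : (e.1 == v) = false by apply/negP => /eqP h; move: vS; rewrite -h h1.
have n2 : (e.2 == v) = false by apply/negP => /eqP h; move: vS; rewrite -h h2.
by rewrite /lf /upd n1 n2.
Qed.

Lemma lf_upd_ed w t x : x \in Nv ->
  lf (upd w t) (ed x) = (if pos v x && (x < v)%N then -1 else 1) * (t - bp w x).
Proof.
move=> xN; have xv := Nv_neq xN; rewrite /lf /ed /upd /bp.
case: (ltnP v x) => h /=.
- rewrite eqxx (negbTE xv) [(x < v)%N]ltnNge (ltnW h) andbF mul1r; case: (pos v x) => //.
  by rewrite opprK.
- have hxv : (x < v)%N by rewrite ltn_neqAle h andbT; apply: contra xv => /eqP hh; apply/eqP/val_inj.
  rewrite eqxx (negbTE xv) hxv psym; case: (pos v x) => /=.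
  + by rewrite mulN1r opprB.
  + by rewrite mul1r opprK addrC.
Qed.

Lemma gen_upd w t : gen (v |: S') (upd w t) <->
  gen S' w /\ (forall x, x \in Nv -> t != bp w x).
Proof.
split.
- move=> g; split.
  + move=> e eE; rewrite -(lf_upd_old w t eE); apply: g.
    by apply: (subsetP ES_sub).
  + move=> x xN; have := g _ (ed_in xN); rewrite lf_upd_ed //.
    by rewrite mulf_eq0 subr_eq0 negb_or => /andP[_].
- case=> g1 g2 e; rewrite ES_split inE => /orP[eE|/imsetP[x xN ->]].
  + by rewrite lf_upd_old // g1.
  + rewrite lf_upd_ed // mulf_eq0 subr_eq0 negb_or g2 // andbT.
    by case: ifP => _; rewrite ?oppr_eq0 oner_eq0.
Qed.

Lemma lt_flip (a b : R) : a != b -> (a < b) = ~~ (b < a).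
Proof. by move=> h; rewrite ltNge le_eqVlt eq_sym (negbTE h). Qed.

Lemma sgn_ed w t w' t' x : x \in Nv -> t != bp w x -> t' != bp w' x ->
  ((0 < lf (upd w t) (ed x)) != (0 < lf (upd w' t') (ed x))) =
  ((bp w x < t) != (bp w' x < t')).
Proof.
move=> xN h1 h2; rewrite !lf_upd_ed //; case: ifP => _.
- rewrite !mulN1r !oppr_gt0 !subr_lt0 (lt_flip h1) (lt_flip h2).
  by case: (_ < _); case: (_ < _).
- by rewrite !mul1r !subr_gt0.
Qed.

Lemma DD_upd w t w' t' : (forall x, x \in Nv -> t != bp w x) ->
  (forall x, x \in Nv -> t' != bp w' x) ->
  #|DD (v |: S') (upd w t) (upd w' t')| =
  (#|DD S' w w'| + #|[set x in Nv | ((bp w x < t) != (bp w' x < t'))%R]|)%N.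
Proof.
move=> g1 g2.
set X := [set x in Nv | _].
have -> : DD (v |: S') (upd w t) (upd w' t') = DD S' w w' :|: ed @: X.
  apply/setP => e; rewrite memDD ES_split !in_setU memDD.
  case: (boolP (e \in ES S')) => hE /=.
  - rewrite !lf_upd_old //; apply/esym; rewrite -[RHS]orbF; congr (_ || _).
    apply/negP => /imsetP[x]; rewrite inE => /andP[xN _] ex.
    have := ES_disj; rewrite disjoints_subset => /subsetP /(_ e hE).
    by rewrite inE ex imset_f.
  - case: (boolP (e \in ed @: Nv)) => /= hN.
    + case/imsetP: hN => x xN ->; rewrite (mem_imset _ _ ed_inj).
      by rewrite inE xN sgn_ed ?g1 ?g2.
    + apply/esym/negP => /imsetP[x]; rewrite inE => /andP[xN _] ex.
      by move: hN; rewrite ex imset_f.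
rewrite card_disjU; first by congr (_ + _)%N; apply: card_imset; exact: ed_inj.
rewrite disjoints_subset; apply/subsetP => e; rewrite inE => /andP[hE _].
rewrite inE; apply/imsetP => -[x]; rewrite inE => /andP[xN _] ex.
have := ES_disj; rewrite disjoints_subset => /subsetP /(_ e hE).
by rewrite inE ex imset_f.
Qed.


Lemma nb_edge x y : x \in Nv -> y \in Nv -> x != y ->
  [/\ pos v x -> pos v y -> pos x y, ~~ pos v x -> ~~ pos v y -> pos x y,
      pos v x -> ~~ pos v y -> neg x y & ~~ pos v x -> pos v y -> neg x y].
Proof.
move=> xN yN xy; have [_ h] := simp.
have xS : x \in v |: S' by apply: setU1r; move: xN; rewrite inE => /andP[].
have yS : y \in v |: S' by apply: setU1r; move: yN; rewrite inE => /andP[].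
have hx : pos v x || neg v x by move: xN; rewrite inE => /andP[].
have hy : pos v y || neg v y by move: yN; rewrite inE => /andP[].
have [h1 h2] := h x y xS yS xy (Nv_neq xN) (Nv_neq yN).
have yx : y != x by rewrite eq_sym.
have [_ h4] := h y x yS xS yx (Nv_neq yN) (Nv_neq xN).
split.
- by move=> a b; apply: h1; rewrite a b.
- by move=> a b; apply: h1; move: hx hy; rewrite (negbTE a) (negbTE b) /= => -> ->.
- by move=> a b; apply: h2; move: hy; rewrite a (negbTE b) /= => ->.
- by move=> a b; rewrite nsym; apply: h4; move: hx; rewrite b (negbTE a) /= => ->.
Qed.

Definition ed2 (x y : 'I_n) := if (x < y)%N then (x, y) else (y, x).

Lemma bp_diff x y : x \in Nv -> y \in Nv -> x != y ->
  ed2 x y \in ES S' /\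
  exists b : bool, forall w, bp w x - bp w y = (if b then lf w (ed2 x y) else - lf w (ed2 x y)).
Proof.
move=> xN yN xy; have [p1 p2 p3 p4] := nb_edge xN yN xy.
have xS : x \in S' by move: xN; rewrite inE => /andP[].
have yS : y \in S' by move: yN; rewrite inE => /andP[].
have hxy : pos x y || neg x y.
  case: (boolP (pos v x)) => a; case: (boolP (pos v y)) => b.
  - by rewrite p1.
  - by rewrite p3 // orbT.
  - by rewrite p4 // orbT.
  - by rewrite p2.
have nxy : pos x y -> neg x y = false by move=> h; apply/negP => h'; move: (pndis x y); rewrite h h'.
split.
- rewrite /ed2 inE /EE /sg_edges inE; case: (ltnP x y) => h /=.
  + by rewrite h hxy xS yS.
  + have h' : (y < x)%N by rewrite ltn_neqAle h andbT; apply: contra xy => /eqP hh; apply/eqP/val_inj.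
    by rewrite h' psym nsym hxy xS yS.
have npn : neg x y -> pos x y = false.
  by move=> h; apply/negP => h'; move: (pndis x y); rewrite h h'.
rewrite /ed2 /lf /bp; case: (ltnP x y) => h /=.
- case: (boolP (pos v x)) => a; case: (boolP (pos v y)) => b.
  + by exists true => w; rewrite (p1 a b).
  + by exists true => w; rewrite (npn (p3 a b)) opprK.
  + by exists false => w; rewrite (npn (p4 a b)) opprD.
  + by exists false => w; rewrite (p2 a b) opprB opprK addrC.
- rewrite [pos y x]psym; case: (boolP (pos v x)) => a; case: (boolP (pos v y)) => b.
  + by exists false => w; rewrite (p1 a b) opprB.
  + by exists true => w; rewrite (npn (p3 a b)) opprK addrC.
  + by exists false => w; rewrite (npn (p4 a b)) opprD addrC.
  + by exists true => w; rewrite (p2 a b) opprK addrC.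
Qed.

Lemma order_transfer w w' x y : gen S' w -> gen S' w' -> DD S' w w' = set0 ->
  x \in Nv -> y \in Nv -> x != y ->
  (bp w y < bp w x) = (bp w' y < bp w' x).
Proof.
move=> g g' D0 xN yN xy; have [eE [b hb]] := bp_diff xN yN xy.
have s : (0 < lf w (ed2 x y)) = (0 < lf w' (ed2 x y)).
  apply/eqP; apply: negbNE; apply/negP => hd.
  by have := in_set0 (ed2 x y); rewrite -D0 memDD eE hd.
rewrite -[bp w y < _]subr_gt0 -[bp w' y < _]subr_gt0 !hb; case: {hb} b; first exact: s.
by rewrite !oppr_gt0 (lt_flip (g _ eE)) (lt_flip (g' _ eE)) s.
Qed.


Definition AA w t := [set x in Nv | bp w x < t].
Lemma memAA w t x : (x \in AA w t) = (x \in Nv) && (bp w x < t).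
Proof. by rewrite /AA in_set. Qed.

Definition Bw w := map (bp w) (enum Nv).
Definition sB w := sort <=%R (Bw w).
Definition kk := #|Nv|.
Definition low w j := if j == 0%N then nth 0 (sB w) 0 - 1 else nth 0 (sB w) j.-1.
Definition high w j := if j == kk then nth 0 (sB w) kk.-1 + 1 else nth 0 (sB w) j.
Definition tf w j := (low w j + high w j) / 2.

Lemma card_setp (p : pred 'I_n) : #|[set x in Nv | p x]| = count p (enum Nv).
Proof.
rewrite cardE -size_filter; apply: perm_size; apply: uniq_perm.
- exact: enum_uniq.
- exact/filter_uniq/enum_uniq.
- by move=> x; rewrite [LHS]mem_enum mem_filter mem_enum inE andbC.
Qed.

Lemma cardA w t : #|AA w t| = count (fun b => b < t) (sB w).
Proof. by rewrite /AA card_setp /sB count_sort /Bw count_map. Qed.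

Lemma size_sB w : size (sB w) = kk.
Proof. by rewrite /sB size_sort size_map -cardE. Qed.

Lemma bp_inj w : gen S' w -> {in Nv &, injective (bp w)}.
Proof.
move=> g x y xN yN e; apply/eqP; apply: contraT => xy.
have [eE [b hb]] := bp_diff xN yN xy.
have h := hb w; rewrite e subrr in h; have g0 := g _ eE.
clear hb; case: b h => h.
- by rewrite -h eqxx in g0.
- by move: g0; rewrite -oppr_eq0 -h eqxx.
Qed.

Lemma sB_sorted w : gen S' w -> sorted <%R (sB w).
Proof.
move=> g; rewrite lt_sorted_uniq_le sort_uniq /Bw map_inj_in_uniq ?enum_uniq /=.
- by apply: sort_sorted; apply: le_total.
- by move=> x y; rewrite !mem_enum; apply: bp_inj.
Qed.

Lemma sB_lt w i j : gen S' w -> (i < j)%N -> (j < kk)%N ->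
  nth 0 (sB w) i < nth 0 (sB w) j.
Proof.
move=> g ij jk.
apply: (@sorted_ltn_nth _ <%R lt_trans 0 (sB w) (sB_sorted g) i j) => //;
  rewrite inE size_sB; lia.
Qed.

Lemma sB_le w i j : gen S' w -> (i <= j)%N -> (j < kk)%N ->
  nth 0 (sB w) i <= nth 0 (sB w) j.
Proof.
move=> g; rewrite leq_eqVlt => /orP[/eqP -> _|ij jk]; first exact: lexx.
exact/ltW/sB_lt.
Qed.

Lemma tf_prop w j i : gen S' w -> (j <= kk)%N -> (i < kk)%N ->
  ((nth 0 (sB w) i < tf w j) = (i < j)%N) /\ (nth 0 (sB w) i != tf w j).
Proof.
move=> g jk ik.
have lh : low w j < high w j.
  rewrite /low /high; case: eqP => [j0|jn0]; case: eqP => [jkk|jnk].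
  - by rewrite -jkk j0 /=; lra.
  - by rewrite j0; lra.
  - by rewrite jkk; lra.
  - apply: sB_lt => //; lia.
have tlo : low w j < tf w j by rewrite /tf; lra.
have thi : tf w j < high w j by rewrite /tf; lra.
case: (ltnP i j) => ij.
- have hl : nth 0 (sB w) i <= low w j.
    rewrite /low; case: eqP => [j0|_]; first lia.
    apply: sB_le => //; lia.
  have hlt : nth 0 (sB w) i < tf w j by apply: le_lt_trans hl tlo.
  by rewrite hlt (lt_eqF hlt).
- have hl : high w j <= nth 0 (sB w) i.
    rewrite /high; case: eqP => [jkk|_]; first lia.
    apply: sB_le => //.
  have hlt : tf w j < nth 0 (sB w) i by apply: lt_le_trans thi hl.
  by rewrite (lt_gtF hlt) (gt_eqF hlt).
Qed.

Lemma bp_tf w j x : gen S' w -> (j <= kk)%N -> x \in Nv ->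
  ((bp w x < tf w j) = (index (bp w x) (sB w) < j)%N) /\ (tf w j != bp w x).
Proof.
move=> g jk xN.
have mem : bp w x \in sB w by rewrite /sB mem_sort /Bw map_f // mem_enum.
have ik : (index (bp w x) (sB w) < kk)%N by rewrite -(size_sB w) index_mem.
have [h1 h2] := tf_prop g jk ik; rewrite nth_index // in h1 h2.
by rewrite h1 eq_sym h2.
Qed.

Lemma tf_gen w j : gen S' w -> (j <= kk)%N -> forall x, x \in Nv -> tf w j != bp w x.
Proof. by move=> g jk x xN; have [] := bp_tf g jk xN. Qed.

Lemma cardA_tf w j : gen S' w -> (j <= kk)%N -> #|AA w (tf w j)| = j.
Proof.
move=> g jk; rewrite cardA -(cat_take_drop j (sB w)) count_cat.
have -> : count (fun b => b < tf w j) (take j (sB w)) = j.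
  have hs : size (take j (sB w)) = j by rewrite size_takel // size_sB.
  rewrite -{3}hs; apply/eqP; rewrite -all_count; apply/(all_nthP 0) => i.
  rewrite hs => ij; rewrite nth_take //.
  have [-> _] := tf_prop g jk (leq_trans ij jk : (i < kk)%N) ; by [].
have -> : count (fun b => b < tf w j) (drop j (sB w)) = 0%N.
  apply/eqP; rewrite -leqn0 leqNgt -has_count; apply/negP => /(has_nthP 0) [i].
  rewrite size_drop size_sB nth_drop => hi.
  have hik : (j + i < kk)%N by lia.
  have [-> _] := tf_prop g jk hik; lia.
by rewrite addn0.
Qed.

Lemma AA_bot w : gen S' w -> AA w (tf w 0) = set0.
Proof.
move=> g; apply/setP => x; rewrite memAA in_set0; case: (boolP (x \in Nv)) => //= xN.
by have [-> _] := bp_tf g (leq0n kk) xN.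
Qed.

Lemma AA_top w : gen S' w -> AA w (tf w kk) = Nv.
Proof.
move=> g; apply/setP => x; rewrite memAA; case: (boolP (x \in Nv)) => //= xN.
have [-> _] := bp_tf g (leqnn kk) xN.
have mem : bp w x \in sB w by rewrite /sB mem_sort /Bw map_f // mem_enum.
by rewrite -(size_sB w) index_mem.
Qed.

Definition XX w t w' t' := [set x in Nv | (bp w x < t) != (bp w' x < t')].

Lemma memXX w t w' t' x : (x \in XX w t w' t') =
  (x \in Nv) && ((bp w x < t) != (bp w' x < t')).
Proof. by rewrite /XX in_set. Qed.

Lemma DD_updX w t w' t' : (forall x, x \in Nv -> t != bp w x) ->
  (forall x, x \in Nv -> t' != bp w' x) ->
  #|DD (v |: S') (upd w t) (upd w' t')| = (#|DD S' w w'| + #|XX w t w' t'|)%N.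
Proof. exact: DD_upd. Qed.

Lemma card_xor_le w t1 t2 : t1 <= t2 ->
  (#|AA w t1| + #|XX w t1 w t2|)%N = #|AA w t2|.
Proof.
move=> h.
have sub : AA w t1 \subset AA w t2.
  by apply/subsetP => x; rewrite !memAA => /andP[-> hx] /=; apply: lt_le_trans hx h.
have -> : XX w t1 w t2 = AA w t2 :\: AA w t1.
  apply/setP => x; rewrite memXX in_setD !memAA; case: (x \in Nv); rewrite /= ?andbF //.
  case: (boolP (bp w x < t1)) => hx /=.
  - by rewrite (lt_le_trans hx h).
  - by case: (bp w x < t2).
rewrite cardsDS //; have := subset_leq_card sub; lia.
Qed.

Lemma card_xor w t1 t2 :
  (#|AA w t1| + #|XX w t1 w t2|)%N = #|AA w t2| \/
  (#|AA w t2| + #|XX w t1 w t2|)%N = #|AA w t1|.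
Proof.
case/orP: (le_total t1 t2) => h; [by left; apply: card_xor_le | right].
have -> : XX w t1 w t2 = XX w t2 w t1.
  by apply/setP => x; rewrite !memXX; case: (bp w x < t1); case: (bp w x < t2).
exact: card_xor_le.
Qed.

Lemma AA_sub w w' t t' : gen S' w -> gen S' w' -> DD S' w w' = set0 ->
  (forall x, x \in Nv -> t' != bp w' x) -> #|AA w t| = #|AA w' t'| ->
  AA w t \subset AA w' t'.
Proof.
move=> g g' D0 gt' ceq; apply/subsetP => x xA; apply: contraT => xnA.
have xN : x \in Nv by move: xA; rewrite memAA => /andP[].
have hx : bp w x < t by move: xA; rewrite memAA => /andP[].
have hx' : t' < bp w' x.
  move: xnA; rewrite memAA xN /= -leNgt le_eqVlt => /orP[/eqP e|//].
  by move: (gt' x xN); rewrite e eqxx.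
have hsub : AA w' t' \subset AA w t :\ x.
  apply/subsetP => y; rewrite memAA => /andP[yN hy].
  have yx : y != x by apply: contraTneq hy => ->; rewrite -leNgt ltW.
  rewrite in_setD1 memAA yx yN /=.
  have : bp w' y < bp w' x by apply: lt_trans hy hx'.
  rewrite -(order_transfer g g' D0 xN yN (negbT _ : x != y)); last by rewrite eq_sym (negbTE yx).
  by move=> h; apply: lt_trans h hx.
have h1 := subset_leq_card hsub.
move: (cardsD1 x (AA w t)); rewrite xA /= => h2.
by move: h1; rewrite -ceq h2 add1n ltnn.
Qed.

Lemma AA_eq w w' t t' : gen S' w -> gen S' w' -> DD S' w w' = set0 ->
  (forall x, x \in Nv -> t != bp w x) ->
  (forall x, x \in Nv -> t' != bp w' x) -> #|AA w t| = #|AA w' t'| ->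
  XX w t w' t' = set0.
Proof.
move=> g g' D0 gt gt' ceq.
have e : AA w t = AA w' t'.
  apply/eqP; rewrite eqEsubset (AA_sub g g' D0 gt' ceq) /=.
  by apply: AA_sub => //; rewrite DD_sym.
apply/setP => x; rewrite memXX in_set0; case: (boolP (x \in Nv)) => //= xN.
have : (x \in AA w t) = (x \in AA w' t') by rewrite e.
by rewrite !memAA xN /= => ->; rewrite eqxx.
Qed.


Lemma XX_bot w w' : gen S' w -> gen S' w' -> XX w (tf w 0) w' (tf w' 0) = set0.
Proof.
move=> g g'; apply/setP => x; rewrite memXX in_set0; case: (boolP (x \in Nv)) => //= xN.
have h : x \notin AA w (tf w 0) by rewrite (AA_bot g) in_set0.
have h' : x \notin AA w' (tf w' 0) by rewrite (AA_bot g') in_set0.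
by move: h h'; rewrite !memAA xN /= => /negbTE -> /negbTE ->.
Qed.

Lemma XX_top w w' : gen S' w -> gen S' w' -> XX w (tf w kk) w' (tf w' kk) = set0.
Proof.
move=> g g'; apply/setP => x; rewrite memXX in_set0; case: (boolP (x \in Nv)) => //= xN.
have h : x \in AA w (tf w kk) by rewrite (AA_top g).
have h' : x \in AA w' (tf w' kk) by rewrite (AA_top g').
by move: h h'; rewrite !memAA xN /= => -> ->.
Qed.

Lemma kk_le1 : #|ES S'| = 0%N -> (kk <= 1)%N.
Proof.
move=> h; rewrite leqNgt; apply/negP => /card_gt1P [x [y [xN yN xy]]].
have [eE _] := bp_diff xN yN xy.
by rewrite (cards0_eq h) in_set0 in eE.
Qed.

Local Open Scope nat_scope.

Lemma idx p K i j : (j < K)%N -> p = (i * K + j)%N -> p %/ K = i /\ p %% K = j.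
Proof.
move=> h2 ->. have h1 : (0 < K)%N by lia.
by rewrite divnMDl // divn_small // addn0 modnMDl modn_small.
Qed.

Lemma step L' : claim S' L' -> exists L, claim (v |: S') L.
Proof.
move=> [cg cc cu ca cy cs cp].
set m := size L' in cg cc cu ca cy cs cp.
set K := kk.+1.
pose wi i := nthL L' i.
pose jj p := if odd (p %/ K) then (kk - p %% K)%N else p %% K.
pose F p := upd (wi (p %/ K)) (tf (wi (p %/ K)) (jj p)).
have m1 : (0 < m)%N by apply: leq_ltn_trans (cs).
have Kpos : (0 < K)%N by [].
have modlt p : (p %% K < K)%N by rewrite ltn_pmod.
have jjle p : (jj p <= kk)%N.
  by rewrite /jj; case: ifP => _; [rewrite leq_subr | have := modlt p; rewrite ltnS].
have ilt p : (p < m * K)%N -> (p %/ K < m)%N by move=> h; rewrite ltn_divLR.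
have gw p : (p < m * K)%N -> gen S' (wi (p %/ K)) by move=> h; apply: cg; apply: ilt.
have tg p : (p < m * K)%N -> forall x, x \in Nv -> tf (wi (p %/ K)) (jj p) != bp (wi (p %/ K)) x.
  by move=> h; apply: tf_gen; [apply: gw | apply: jjle].
have DDF p q : (p < m * K)%N -> (q < m * K)%N ->
    #|DD (v |: S') (F p) (F q)| = (#|DD S' (wi (p %/ K)) (wi (q %/ K))| +
     #|XX (wi (p %/ K)) (tf (wi (p %/ K)) (jj p)) (wi (q %/ K)) (tf (wi (q %/ K)) (jj q))|)%N.
  by move=> hp hq; rewrite /F DD_upd //; [apply: tg | apply: tg].
have XXc w j1 j2 : gen S' w -> (j1 <= kk)%N -> (j2 <= kk)%N ->
    #|XX w (tf w j1) w (tf w j2)| = (if (j1 <= j2)%N then j2 - j1 else j1 - j2)%N.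
  move=> g h1 h2; have := card_xor w (tf w j1) (tf w j2).
  rewrite !cardA_tf //; case: leqP => hh; lia.
exists (mkseq F (m * K)).
have nthF p : (p < m * K)%N -> nthL (mkseq F (m * K)) p = F p.
  by move=> h; rewrite /nthL nth_mkseq.
constructor; rewrite ?size_mkseq.
- move=> p hp; rewrite nthF //; apply/gen_upd; split; [exact: gw | exact: tg].
- move=> w g.
  have ext : forall x, upd w (w v) x = w x by move=> x; rewrite /upd; case: eqP => [->|].
  have g2 : gen (v |: S') (upd w (w v)) by move=> e eE; rewrite (lf_ext e ext); apply: g.
  case/gen_upd: g2 => g' gt.
  have [i hi Di] := cc w g'.
  set j0 := #|AA w (w v)|.
  have j0le : (j0 <= kk)%N.
    by apply: subset_leq_card; apply/subsetP => x; rewrite memAA => /andP[].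
  pose jt := if odd i then (kk - j0)%N else j0.
  have jtK : (jt < K)%N by rewrite /jt /K; case: (odd i); lia.
  have [e1 e2] := idx jtK (erefl (i * K + jt)%N).
  have hp : (i * K + jt < m * K)%N.
    have : (i.+1 * K <= m * K)%N by rewrite leq_mul2r hi orbT.
    rewrite mulSn; lia.
  exists (i * K + jt)%N => //.
  have ejj : jj (i * K + jt)%N = j0.
    by rewrite /jj e1 e2 /jt; case: (odd i) => //; lia.
  apply: cards0_eq; rewrite nthF // -(DD_ext _ _ ext) /F e1 ejj DD_updX //; last first.
    by apply: tf_gen => //; apply: cg.
  rewrite Di cards0 add0n.
  rewrite (AA_eq g' (cg _ hi) Di gt) ?cards0 //.
  - by apply: tf_gen => //; apply: cg.
  - by rewrite cardA_tf //; apply: cg.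
- move=> p q hp hq; rewrite !nthF // => D0.
  have := DDF p q hp hq; rewrite D0 cards0 => /esym/eqP; rewrite addn_eq0.
  case/andP => /eqP d1 /eqP d2.
  have ei : p %/ K = q %/ K by apply: cu; [apply: ilt | apply: ilt | apply: cards0_eq].
  rewrite ei XXc // in d2; last exact: (gw _ hq).
  have ejj : jj p = jj q by move: d2; case: ifP => h; lia.
  have em : p %% K = q %% K.
    move: ejj; rewrite /jj ei; have := modlt p; have := modlt q; case: ifP => _; lia.
  by rewrite (divn_eq p K) (divn_eq q K) ei em.
- move=> p hp; have hp' : (p < m * K)%N by lia.
  rewrite !nthF //.
  case: (ltnP (p %% K) kk) => hj.
  + have [e1 e2] : p.+1 %/ K = p %/ K /\ p.+1 %% K = (p %% K).+1.
      by apply: (@idx _ _ (p %/ K) (p %% K).+1); [rewrite /K ltnS | rewrite {1}(divn_eq p K) addnS].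
    rewrite DDF // e1 DD_refl cards0 add0n XXc //; last exact: (gw _ hp').
    rewrite /jj e1 e2; case: (odd (p %/ K)) => /=; case: ifP => h; lia.
  + have hk : p %% K = kk by have := modlt p; have eK : K = kk.+1 by []; lia.
    have [e1 e2] : p.+1 %/ K = (p %/ K).+1 /\ p.+1 %% K = 0%N.
      by apply: (@idx _ _ (p %/ K).+1 0) => //; rewrite {1}(divn_eq p K) hk mulSn addn0 addnC.
    have im : ((p %/ K).+1 < m)%N by rewrite -e1; apply: ilt.
    have g1 := gw _ hp'; have g2 := gw _ hp.
    rewrite DDF // e1 (ca _ im).
    rewrite /jj e1 e2 hk /= subn0 subnn.
    rewrite e1 in g2.
    case: (odd (p %/ K)) => /=.
    * by rewrite XX_bot ?cards0.
    * by rewrite XX_top ?cards0.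
- move=> h1.
  have hl : ((m * K).-1 < m * K)%N by rewrite prednK ?ltnSn //; lia.
  have h0 : (0 < m * K)%N by lia.
  rewrite !nthF //.
  have [m_1|ev] := cp.
  + have es : #|ES S'| = 0%N by have := cs; rewrite -/m m_1; lia.
    have k1 : kk = 1%N by have := kk_le1 es; move: h1; rewrite m_1 /K; lia.
    have [e1 e2] : (m * K).-1 %/ K = 0%N /\ (m * K).-1 %% K = 1%N.
      by apply: (@idx _ _ 0 1); rewrite ?m_1 /K k1.
    rewrite DDF // e1 /= ?div0n DD_refl cards0 add0n XXc //; last by apply: cg.
    by rewrite /jj e1 e2 /= ?mod0n ?div0n /=.
  + have m2 : (1 < m)%N by move: ev m1; case: (m) => [|[|]].
    have [e1 e2] : (m * K).-1 %/ K = m.-1 /\ (m * K).-1 %% K = kk.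
      by apply: (@idx _ _ m.-1 kk); [rewrite /K | rewrite /K; case: (m) m1 => // mm _; rewrite mulSn /=; lia].
    have om : odd m.-1 by move: ev m1; case: (m) => //= mm; rewrite negbK.
    rewrite DDF // e1 ?div0n (cy m2).
    rewrite /jj e1 e2 om ?div0n ?mod0n /= subnn.
    by rewrite XX_bot ?cards0 //; apply: cg; [lia | lia].
- rewrite ES_card; have := cs; rewrite -/m -/kk; nia.
- have [m_1|ev] := cp.
  + have es : #|ES S'| = 0%N by have := cs; rewrite -/m m_1; lia.
    have := kk_le1 es; rewrite m_1 mul1n /K; case: (kk) => [|[|]] //; by [left | right].
  + by right; rewrite oddM negb_and ev.
Qed.

End Step.

Lemma claim_PEO s : signed_PEO pos neg s -> exists L, claim [set: 'I_n] L.
Proof.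
case=> hperm hsimp.
have us : uniq s by rewrite (perm_uniq hperm) enum_uniq.
have ms : forall x, x \in s by move=> x; rewrite (perm_mem hperm) mem_enum.
suff H : forall m, (m <= size s)%N -> exists L, claim [set x | x \in drop (size s - m) s] L.
  have [L hL] := H (size s) (leqnn _); exists L.
  have -> : [set: 'I_n] = [set x | x \in drop (size s - size s) s].
    by apply/setP => x; rewrite subnn drop0 !inE ms.
  exact: hL.
elim=> [|m IH] hm.
- exists [:: fun _ => 0]; apply: claim0; apply/setP => e; rewrite !inE subn0 drop_size in_nil /=.
  by rewrite andbF.
- set k0 := (size s - m.+1)%N.
  have hk : (size s - m = k0.+1)%N by rewrite /k0; lia.
  case e : (drop k0 s) => [|v s2].
    by move: (size_drop k0 s); rewrite e /k0 /=; lia.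
  have e2 : drop k0.+1 s = s2 by rewrite -add1n -drop_drop e drop1.
  have [L' hL'] := IH (ltnW hm); rewrite hk e2 in hL'.
  have ud : uniq (v :: s2) by rewrite -e drop_uniq.
  have vS : v \notin [set x | x \in s2] by rewrite inE; move: ud => /= /andP[].
  have eset : v |: [set x | x \in s2] = [set x | x \notin take k0 s].
    have hd : ~~ has (mem (take k0 s)) (v :: s2).
      by move: us; rewrite -{1}(cat_take_drop k0 s) cat_uniq e => /and3P[].
    apply/setP => x; rewrite in_setU1 !inE.
    have hx := ms x; rewrite -(cat_take_drop k0 s) mem_cat e in hx.
    apply/idP/idP.
    + by move=> h; apply/negP => ht; move/hasP: hd; apply; exists x.
    + by move=> ht; move: hx; rewrite (negbTE ht) /= in_cons.
  have simp : signed_simplicial pos neg (v |: [set x | x \in s2]) v.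
    rewrite eset; apply: (hsimp _ s2).
    by rewrite -e cat_take_drop.
  have [L hL] := step vS simp hL'.
  exists L.
  have -> : [set x | x \in v :: s2] = v |: [set x | x \in s2].
    by apply/setP => x; rewrite !inE.
  exact: hL.
Qed.

Lemma ES_setT : ES [set: 'I_n] = EE.
Proof. by apply/setP => e; rewrite /ES in_set !inE /= !andbT. Qed.

Definition rv (c : 'I_n -> R) : 'rV[R]_n := \row_k c k.

Definition Zp (tp : 'I_n -> 'I_n -> R) : 'rV[R]_n :=
  \sum_(i < n) \sum_(j < n | (i < j)%N && pos i j) tp i j *: (unitv R i - unitv R j).
Definition Zn (tn : 'I_n -> 'I_n -> R) : 'rV[R]_n :=
  \sum_(i < n) \sum_(j < n | (i < j)%N && neg i j) tn i j *: (unitv R i + unitv R j).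
Definition Zs (tp tn : 'I_n -> 'I_n -> R) : 'rV[R]_n := Zp tp + Zn tn.

Lemma zon_Zs x : signed_zonotope pos neg x <->
  exists tp tn, [/\ (forall i j, -1 <= tp i j <= 1), (forall i j, -1 <= tn i j <= 1) & x = Zs tp tn].
Proof.
split.
- by case=> tp [tn [h1 [h2 ->]]]; exists tp, tn.
- by case=> tp [tn [h1 h2 ->]]; exists tp, tn.
Qed.

Lemma dotvD (c x y : 'rV[R]_n) : dotv c (x + y) = dotv c x + dotv c y.
Proof. by rewrite /dotv -big_split; apply: eq_bigr => k _; rewrite mxE mulrDr. Qed.

Lemma dotv0 (c : 'rV[R]_n) : dotv c 0 = 0.
Proof. by rewrite /dotv big1 // => k _; rewrite mxE mulr0. Qed.

Lemma dotvZ (c : 'rV[R]_n) a (x : 'rV[R]_n) : dotv c (a *: x) = a * dotv c x.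
Proof. by rewrite /dotv mulr_sumr; apply: eq_bigr => k _; rewrite mxE mulrCA. Qed.

Lemma dotvN (c x : 'rV[R]_n) : dotv c (- x) = - dotv c x.
Proof. by rewrite -scaleN1r dotvZ mulN1r. Qed.

Lemma dotv_sum (c : 'rV[R]_n) (I : Type) (r : seq I) (P : pred I) (F : I -> 'rV[R]_n) :
  dotv c (\sum_(i <- r | P i) F i) = \sum_(i <- r | P i) dotv c (F i).
Proof. exact: (big_morph (dotv c) (dotvD c) (dotv0 c)). Qed.

Lemma dotv_unit c i : dotv (rv c) (unitv R i) = c i.
Proof.
rewrite /dotv (bigD1 i) //= big1 ?addr0.
- by rewrite !mxE !eqxx /= mulr1.
- move=> k ki; rewrite !mxE eqxx /=; case: eqP => [e|_]; last by rewrite mulr0.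
  by rewrite e eqxx in ki.
Qed.

Definition Val (c : 'I_n -> R) (tp tn : 'I_n -> 'I_n -> R) : R :=
  \sum_(i < n) \sum_(j < n | (i < j)%N && pos i j) tp i j * (c i - c j) +
  \sum_(i < n) \sum_(j < n | (i < j)%N && neg i j) tn i j * (c i + c j).

Lemma dotv_Zs c tp tn : dotv (rv c) (Zs tp tn) = Val c tp tn.
Proof.
rewrite /Zs /Zp /Zn /Val dotvD !dotv_sum; congr (_ + _); apply: eq_bigr => i _;
  rewrite dotv_sum; apply: eq_bigr => j _.
- by rewrite dotvZ dotvD dotvN !dotv_unit.
- by rewrite dotvZ dotvD !dotv_unit.
Qed.

Definition Mv (c : 'I_n -> R) : R :=
  \sum_(i < n) \sum_(j < n | (i < j)%N && pos i j) `|c i - c j| +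
  \sum_(i < n) \sum_(j < n | (i < j)%N && neg i j) `|c i + c j|.

Lemma term_le (t a : R) : -1 <= t <= 1 -> t * a <= `|a|.
Proof.
case/andP => h1 h2; case: (leP 0 a) => ha.
- by rewrite ger0_norm //; nra.
- by rewrite ltr0_norm //; nra.
Qed.

Definition sR (a : R) : R := if 0 < a then 1 else -1.

Lemma sR_bound a : -1 <= sR a <= 1.
Proof. by rewrite /sR; case: ifP => _; apply/andP; split; lra. Qed.

Lemma sR_term a : sR a * a = `|a|.
Proof.
rewrite /sR; case: ifP => h.
- by rewrite mul1r gtr0_norm.
- by rewrite mulN1r ler0_norm // leNgt h.
Qed.

Lemma term_eq (t a : R) : -1 <= t <= 1 -> a != 0 -> t * a = `|a| -> t = sR a.
Proof.
case/andP => h1 h2 a0; rewrite /sR; case: ifP => ha.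
- by rewrite gtr0_norm // => e; nra.
- have ha' : a < 0 by rewrite lt_neqAle a0 leNgt ha.
  by rewrite ltr0_norm // => e; nra.
Qed.

Lemma Val_le c tp tn : (forall i j, -1 <= tp i j <= 1) -> (forall i j, -1 <= tn i j <= 1) ->
  Val c tp tn <= Mv c.
Proof.
move=> h1 h2; apply: lerD; apply: ler_sum => i _; apply: ler_sum => j _;
  exact: term_le.
Qed.

Lemma Val_eq c tp tn : (forall i j, -1 <= tp i j <= 1) -> (forall i j, -1 <= tn i j <= 1) ->
  Val c tp tn = Mv c ->
  (forall i j : 'I_n, (i < j)%N -> pos i j -> c i - c j != 0 -> tp i j = sR (c i - c j)) /\
  (forall i j : 'I_n, (i < j)%N -> neg i j -> c i + c j != 0 -> tn i j = sR (c i + c j)).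
Proof.
move=> h1 h2 e.
pose P1 := \sum_(i < n) \sum_(j < n | (i < j)%N && pos i j) (`|c i - c j| - tp i j * (c i - c j)).
pose P2 := \sum_(i < n) \sum_(j < n | (i < j)%N && neg i j) (`|c i + c j| - tn i j * (c i + c j)).
have eP : P1 + P2 = 0.
  rewrite /P1 /P2.
  have hsB : forall (F G : 'I_n -> 'I_n -> R) (Q : 'I_n -> 'I_n -> bool),
      \sum_(i < n) \sum_(j < n | Q i j) (F i j - G i j) =
      \sum_(i < n) \sum_(j < n | Q i j) F i j - \sum_(i < n) \sum_(j < n | Q i j) G i j.
    move=> F G Q; rewrite -sumrB; apply: eq_bigr => i _; by rewrite sumrB.
  rewrite !hsB addrACA -opprD; move: e; rewrite /Val /Mv => ->; by rewrite subrr.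
have p1 : 0 <= P1 by apply: sumr_ge0 => i _; apply: sumr_ge0 => j _; rewrite subr_ge0; apply: term_le.
have p2 : 0 <= P2 by apply: sumr_ge0 => i _; apply: sumr_ge0 => j _; rewrite subr_ge0; apply: term_le.
have [z1 z2] : P1 = 0 /\ P2 = 0.
  by move/eqP: eP; rewrite paddr_eq0 // => /andP[/eqP -> /eqP ->].
have nn1 : forall (k l : 'I_n), 0 <= `|c k - c l| - tp k l * (c k - c l).
  by move=> k l; rewrite subr_ge0; apply: term_le.
have nn2 : forall (k l : 'I_n), 0 <= `|c k + c l| - tn k l * (c k + c l).
  by move=> k l; rewrite subr_ge0; apply: term_le.
split => i j ij hp a0.
- have hij : (i < j)%N && pos i j by rewrite ij hp.
  have hin : forall k : 'I_n, true ->
      0 <= \sum_(l < n | (k < l)%N && pos k l) (`|c k - c l| - tp k l * (c k - c l)).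
    by move=> k _; apply: sumr_ge0 => l _; apply: nn1.
  have z1i := @psumr_eq0P _ _ _ _ hin z1 i isT.
  have := @psumr_eq0P _ _ _ _ (fun l _ => nn1 i l) z1i j hij.
  by move/eqP; rewrite subr_eq0 => /eqP h; apply: term_eq => //; rewrite h.
- have hij : (i < j)%N && neg i j by rewrite ij hp.
  have hin : forall k : 'I_n, true ->
      0 <= \sum_(l < n | (k < l)%N && neg k l) (`|c k + c l| - tn k l * (c k + c l)).
    by move=> k _; apply: sumr_ge0 => l _; apply: nn2.
  have z2i := @psumr_eq0P _ _ _ _ hin z2 i isT.
  have := @psumr_eq0P _ _ _ _ (fun l _ => nn2 i l) z2i j hij.
  by move/eqP; rewrite subr_eq0 => /eqP h; apply: term_eq => //; rewrite h.
Qed.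

Definition cpw (W : 'I_n -> R) i j := sR (W i - W j).
Definition cnw (W : 'I_n -> R) i j := sR (W i + W j).
Definition point W := Zs (cpw W) (cnw W).
Definition genT W := gen [set: 'I_n] W.

Lemma point_in W : signed_zonotope pos neg (point W).
Proof. by apply/zon_Zs; exists (cpw W), (cnw W); split => // i j; apply: sR_bound. Qed.

Lemma dot_point W : dotv (rv W) (point W) = Mv W.
Proof.
rewrite dotv_Zs /Val /Mv; congr (_ + _); apply: eq_bigr => i _; apply: eq_bigr => j _;
  exact: sR_term.
Qed.

Lemma Zs_ext tp tn tp' tn' :
  (forall i j : 'I_n, (i < j)%N -> pos i j -> tp i j = tp' i j) ->
  (forall i j : 'I_n, (i < j)%N -> neg i j -> tn i j = tn' i j) ->
  Zs tp tn = Zs tp' tn'.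
Proof.
move=> h1 h2; rewrite /Zs /Zp /Zn; congr (_ + _); apply: eq_bigr => i _;
  apply: eq_bigr => j /andP[ij h]; [rewrite h1 | rewrite h2] => //.
Qed.

Lemma EE_pos (w : 'I_n -> R) (i j : 'I_n) : (i < j)%N -> pos i j ->
  (i, j) \in ES [set: 'I_n] /\ lf w (i, j) = w i - w j.
Proof. by move=> ij h; rewrite ES_setT /lf /= h /EE /sg_edges inE /= ij h. Qed.

Lemma EE_neg (w : 'I_n -> R) (i j : 'I_n) : (i < j)%N -> neg i j ->
  (i, j) \in ES [set: 'I_n] /\ lf w (i, j) = w i + w j.
Proof.
move=> ij h; have hp : pos i j = false by apply/negP => hp; move: (pndis i j); rewrite hp h.
by rewrite ES_setT /lf /= hp /EE /sg_edges inE /= ij h orbT.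
Qed.

Lemma EE_cases (e : 'I_n * 'I_n) : e \in ES [set: 'I_n] ->
  (e.1 < e.2)%N /\ (pos e.1 e.2 || neg e.1 e.2).
Proof. by rewrite ES_setT /EE /sg_edges inE => /andP[]. Qed.

Lemma sR_eq a b : (0 < a) = (0 < b) -> sR a = sR b.
Proof. by rewrite /sR => ->. Qed.

Lemma sR_inj a b : sR a = sR b -> (0 < a) = (0 < b).
Proof. by rewrite /sR; case: (0 < a); case: (0 < b) => // h; lra. Qed.

Lemma vertex_point W : genT W -> poly_vertex (signed_zonotope pos neg) (point W).
Proof.
move=> g; split; first exact: point_in.
exists (rv W) => y /zon_Zs [tp [tn [b1 b2 ey]]] yne.
rewrite ey dot_point dotv_Zs lt_neqAle Val_le // andbT.
apply/eqP => e; have [v1 v2] := Val_eq b1 b2 e.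
have ez : Zs tp tn = point W.
  apply: Zs_ext => i j ij h.
  - have [eE el] := EE_pos W ij h; rewrite v1 // -el; exact: g.
  - have [eE el] := EE_neg W ij h; rewrite v2 // -el; exact: g.
by rewrite ey ez eqxx in yne.
Qed.

Lemma point_inj W1 W2 : genT W1 -> point W1 = point W2 -> DD [set: 'I_n] W1 W2 = set0.
Proof.
move=> g E.
have h : Val W1 (cpw W2) (cnw W2) = Mv W1 by rewrite -dotv_Zs -/(point W2) -E dot_point.
have [v1 v2] := Val_eq (fun i j => sR_bound _) (fun i j => sR_bound _) h.
apply/setP => -[i j]; rewrite memDD in_set0; case eE: ((i, j) \in _) => //=.
have [ij /orP [hp|hn]] := EE_cases eE; rewrite /= in ij.
- rewrite /= in hp; have [_ el1] := EE_pos W1 ij hp; have [_ el2] := EE_pos W2 ij hp.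
  rewrite el1 el2 (sR_inj (v1 _ _ ij hp _)) ?eqxx //; rewrite -el1; exact: g.
- rewrite /= in hn; have [_ el1] := EE_neg W1 ij hn; have [_ el2] := EE_neg W2 ij hn.
  rewrite el1 el2 (sR_inj (v2 _ _ ij hn _)) ?eqxx //; rewrite -el1; exact: g.
Qed.

Lemma DD0_point W1 W2 : DD [set: 'I_n] W1 W2 = set0 -> point W1 = point W2.
Proof.
move=> D0; have nd : forall e, e \in ES [set: 'I_n] -> (0 < lf W1 e) = (0 < lf W2 e).
  move=> e eE; apply/eqP; apply: negbNE; apply/negP => hd.
  by have := in_set0 e; rewrite -D0 memDD eE hd.
apply: Zs_ext => i j ij h; apply: sR_eq.
- have [eE el1] := EE_pos W1 ij h; have [_ el2] := EE_pos W2 ij h.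
  by rewrite -el1 -el2; apply: nd.
- have [eE el1] := EE_neg W1 ij h; have [_ el2] := EE_neg W2 ij h.
  by rewrite -el1 -el2; apply: nd.
Qed.

Lemma sum_single (V : zmodType) (Q : 'I_n -> 'I_n -> bool) (F : 'I_n -> 'I_n -> V) i0 j0 :
  Q i0 j0 ->
  \sum_(i < n) \sum_(j < n | Q i j) (if (i == i0) && (j == j0) then F i j else 0) = F i0 j0.
Proof.
move=> hq; rewrite (bigD1 i0) //= addrC big1 ?add0r.
- rewrite (bigD1 j0) //= addrC big1 ?add0r.
  + by rewrite !eqxx.
  + by move=> j /andP[_ hj]; rewrite eqxx (negbTE hj).
- by move=> i hi; apply: big1 => j _; rewrite (negbTE hi).
Qed.

Lemma Zp_diff tp tp' : Zp tp' - Zp tp =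
  \sum_(i < n) \sum_(j < n | (i < j)%N && pos i j) (tp' i j - tp i j) *: (unitv R i - unitv R j).
Proof.
rewrite /Zp -sumrB; apply: eq_bigr => i _; rewrite -sumrB; apply: eq_bigr => j _.
by rewrite scalerBl.
Qed.

Lemma Zn_diff tn tn' : Zn tn' - Zn tn =
  \sum_(i < n) \sum_(j < n | (i < j)%N && neg i j) (tn' i j - tn i j) *: (unitv R i + unitv R j).
Proof.
rewrite /Zn -sumrB; apply: eq_bigr => i _; rewrite -sumrB; apply: eq_bigr => j _.
by rewrite scalerBl.
Qed.

Lemma unit_entry (i j : 'I_n) : unitv R i 0 j = (i == j)%:R.
Proof. by rewrite !mxE eqxx /= eq_sym. Qed.

Lemma vertex_char x : poly_vertex (signed_zonotope pos neg) x ->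
  exists2 W, genT W & x = point W.
Proof.
case=> Px [c hc]; pose W := fun k => c 0 k.
have ec : rv W = c by apply/rowP => k; rewrite mxE.
have maxW : forall y, signed_zonotope pos neg y -> dotv c y = Mv W -> y = x.
  move=> y Py hy; apply/eqP; apply: contraT => yx.
  have := hc y Py yx; rewrite hy.
  move/zon_Zs: Px => [tp [tn [b1 b2 ->]]]; rewrite -ec dotv_Zs => hlt.
  by have := Val_le W b1 b2; rewrite leNgt hlt.
have xp : x = point W by apply/esym/maxW; [exact: point_in | rewrite -ec dot_point].
exists W => //.
move=> [i0 j0] eE; apply/negP => /eqP l0.
have [ij /orP [hp|hn]] := EE_cases eE; rewrite /= in ij.
- rewrite /= in hp; pose tp' := fun i j => if (i == i0) && (j == j0) then 1 else cpw W i j.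
  have [_ el] := EE_pos W ij hp; rewrite el in l0.
  have Py : signed_zonotope pos neg (Zs tp' (cnw W)).
    apply/zon_Zs; exists tp', (cnw W); split => // i j; last exact: sR_bound.
    by rewrite /tp'; case: ifP => _; [apply/andP; split; lra | apply: sR_bound].
  have hy : dotv c (Zs tp' (cnw W)) = Mv W.
    rewrite -ec dotv_Zs /Val /Mv; congr (_ + _); last first.
      by apply: eq_bigr => i _; apply: eq_bigr => j _; apply: sR_term.
    apply: eq_bigr => i _; apply: eq_bigr => j _; rewrite /tp'.
    case: ifP => [/andP[/eqP -> /eqP ->]|_]; last exact: sR_term.
    by rewrite l0 mul1r normr0.
  have := maxW _ Py hy; rewrite xp => /(congr1 (fun z => z - point W)).
  rewrite subrr /point /Zs opprD addrACA subrr addr0 Zp_diff.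
  rewrite (eq_bigr (fun i : 'I_n => \sum_(j < n | (i < j)%N && pos i j)
      (if (i == i0) && (j == j0) then 2 *: (unitv R i - unitv R j) else 0))); last first.
    move=> i _; apply: eq_bigr => j _; rewrite /tp'.
    case: ifP => [/andP[/eqP -> /eqP ->]|_]; last by rewrite subrr scale0r.
    by rewrite /cpw l0 /sR ltxx opprK.
  rewrite sum_single; last by rewrite ij hp.
  move/(congr1 (fun z : 'rV[R]_n => z 0 i0)); rewrite !mxE !eqxx /=.
  have ne : (i0 == j0) = false by apply/eqP => h; rewrite h ltnn in ij.
  by rewrite ne /= subr0 mulr1 => /eqP; rewrite pnatr_eq0.
- rewrite /= in hn; pose tn' := fun i j => if (i == i0) && (j == j0) then 1 else cnw W i j.
  have [_ el] := EE_neg W ij hn; rewrite el in l0.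
  have Py : signed_zonotope pos neg (Zs (cpw W) tn').
    apply/zon_Zs; exists (cpw W), tn'; split => // i j; first exact: sR_bound.
    by rewrite /tn'; case: ifP => _; [apply/andP; split; lra | apply: sR_bound].
  have hy : dotv c (Zs (cpw W) tn') = Mv W.
    rewrite -ec dotv_Zs /Val /Mv; congr (_ + _).
      by apply: eq_bigr => i _; apply: eq_bigr => j _; apply: sR_term.
    apply: eq_bigr => i _; apply: eq_bigr => j _; rewrite /tn'.
    case: ifP => [/andP[/eqP -> /eqP ->]|_]; last exact: sR_term.
    by rewrite l0 mul1r normr0.
  have := maxW _ Py hy; rewrite xp => /(congr1 (fun z => z - point W)).
  rewrite subrr /point /Zs opprD addrACA subrr add0r Zn_diff.
  rewrite (eq_bigr (fun i : 'I_n => \sum_(j < n | (i < j)%N && neg i j)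
      (if (i == i0) && (j == j0) then 2 *: (unitv R i + unitv R j) else 0))); last first.
    move=> i _; apply: eq_bigr => j _; rewrite /tn'.
    case: ifP => [/andP[/eqP -> /eqP ->]|_]; last by rewrite subrr scale0r.
    by rewrite /cnw l0 /sR ltxx opprK.
  rewrite sum_single; last by rewrite ij hn.
  move/(congr1 (fun z : 'rV[R]_n => z 0 i0)); rewrite !mxE !eqxx /=.
  have ne : (i0 == j0) = false by apply/eqP => h; rewrite h ltnn in ij.
  by rewrite ne /= addr0 mulr1 => /eqP; rewrite pnatr_eq0.
Qed.

Lemma Zs_comb a b tp tn tp' tn' :
  a *: Zs tp tn + b *: Zs tp' tn' =
  Zs (fun i j => a * tp i j + b * tp' i j) (fun i j => a * tn i j + b * tn' i j).
Proof.
rewrite /Zs /Zp /Zn !scalerDr addrACA; congr (_ + _);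
  rewrite !scaler_sumr -big_split; apply: eq_bigr => i _;
  rewrite !scaler_sumr -big_split; apply: eq_bigr => j _;
  by rewrite scalerDl !scalerA.
Qed.

Lemma lf_lin (a b : R) (w1 w2 : 'I_n -> R) e :
  lf (fun k => a * w1 k + b * w2 k) e = a * lf w1 e + b * lf w2 e.
Proof. by rewrite /lf; case: ifP => _; ring. Qed.

Lemma sR_pm a : sR a = 1 \/ sR a = -1.
Proof. by rewrite /sR; case: ifP => _; [left | right]. Qed.

Lemma sR_opp a1 a2 : a1 != 0 -> a2 != 0 -> (0 < a1) != (0 < a2) -> sR a2 = - sR a1.
Proof.
move=> h1 h2; rewrite /sR; case: (boolP (0 < a1)) => p1; case: (boolP (0 < a2)) => p2 //= _;
  by rewrite ?opprK.
Qed.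

Lemma interp_ok (s t : R) : s = 1 \/ s = -1 -> -1 <= t <= 1 ->
  let l := (1 - s * t) / 2 in
  [/\ 0 <= l, l <= 1 & t = (1 - l) * s + l * (- s)].
Proof.
move=> hs /andP[t1 t2] l; rewrite /l.
case: hs => ->; split; lra.
Qed.

Lemma edge_point W1 W2 : genT W1 -> genT W2 -> #|DD [set: 'I_n] W1 W2| = 1%N ->
  poly_edge (signed_zonotope pos neg) (point W1) (point W2).
Proof.
move=> g1 g2 c1.
have [e0 De] : exists e0, DD [set: 'I_n] W1 W2 = [set e0] by apply/cards1P/eqP.
have : e0 \in DD [set: 'I_n] W1 W2 by rewrite De set11.
rewrite memDD => /andP[e0E d0].
have nd : forall e, e \in ES [set: 'I_n] -> e != e0 -> (0 < lf W1 e) = (0 < lf W2 e).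
  move=> e eE ne; apply/eqP; apply: negbNE; apply/negP => hd.
  have : e \in DD [set: 'I_n] W1 W2 by rewrite memDD eE hd.
  by rewrite De in_set1 (negbTE ne).
set a1 := lf W1 e0; set a2 := lf W2 e0.
have a10 : a1 != 0 by apply: g1.
have a20 : a2 != 0 by apply: g2.
pose c := fun k => `|a2| * W1 k + `|a1| * W2 k.
have lc0 : lf c e0 = 0.
  rewrite lf_lin -/a1 -/a2; move: d0; rewrite -/a1 -/a2.
  case: (boolP (0 < a1)) => p1; case: (boolP (0 < a2)) => p2 //= _.
  - have n2 : a2 < 0 by rewrite lt_neqAle a20 leNgt p2.
    by rewrite (gtr0_norm p1) (ltr0_norm n2); ring.
  - have n1 : a1 < 0 by rewrite lt_neqAle a10 leNgt p1.
    by rewrite (gtr0_norm p2) (ltr0_norm n1); ring.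
have lcs : forall e, e \in ES [set: 'I_n] -> e != e0 ->
    [/\ sR (lf W1 e) = sR (lf c e), sR (lf W2 e) = sR (lf c e) & lf c e != 0].
  move=> e eE ne; have s12 := nd e eE ne.
  have b1 := g1 e eE; have b2 := g2 e eE.
  have q1 : 0 < `|a1| by rewrite normr_gt0.
  have q2 : 0 < `|a2| by rewrite normr_gt0.
  rewrite lf_lin; case: (boolP (0 < lf W1 e)) => h1.
  - have h2 : 0 < lf W2 e by rewrite -s12.
    have hp : 0 < `|a2| * lf W1 e + `|a1| * lf W2 e by apply: addr_gt0; apply: mulr_gt0.
    by rewrite /sR h1 -s12 h1 hp (gt_eqF hp).
  - have n1 : lf W1 e < 0 by rewrite lt_neqAle b1 leNgt h1.
    have n2 : lf W2 e < 0 by rewrite lt_neqAle b2 leNgt -s12 h1.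
    have hn : `|a2| * lf W1 e + `|a1| * lf W2 e < 0 by nra.
    by rewrite /sR (negbTE h1) -s12 (negbTE h1) (lt_gtF hn) (lt_eqF hn).
have termW : forall W, (W = W1 \/ W = W2) ->
    dotv (rv c) (point W) = Mv c.
  move=> W hW; rewrite dotv_Zs /Val /Mv; congr (_ + _); apply: eq_bigr => i _;
    apply: eq_bigr => j /andP[ij h].
  - have [eE el] := EE_pos c ij h.
    case: (eqVneq (i, j) e0) => [ee|ne].
    + by rewrite -el ee lc0 mulr0 normr0.
    + have [s1 s2 s3] := lcs _ eE ne.
      have [_ elW] := EE_pos W ij h.
      rewrite /cpw -elW -el; case: hW => ->; [rewrite s1 | rewrite s2]; exact: sR_term.
  - have [eE el] := EE_neg c ij h.
    case: (eqVneq (i, j) e0) => [ee|ne].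
    + by rewrite -el ee lc0 mulr0 normr0.
    + have [s1 s2 s3] := lcs _ eE ne.
      have [_ elW] := EE_neg W ij h.
      rewrite /cnw -elW -el; case: hW => ->; [rewrite s1 | rewrite s2]; exact: sR_term.
have dx := termW W1 (or_introl erefl).
have dy := termW W2 (or_intror erefl).
split.
- apply/eqP => E; have := point_inj g1 E; move: c1 => /[swap] ->; by rewrite cards0.
- exact: vertex_point.
- exact: vertex_point.
exists (rv c); split.
- move=> z /zon_Zs [tp [tn [b1 b2 ->]]]; rewrite dx dotv_Zs; exact: Val_le.
- by rewrite dx dy.
move=> z /zon_Zs [tp [tn [b1 b2 ->]]]; rewrite dx dotv_Zs => hv.
have [v1 v2] := Val_eq b1 b2 hv.
have [ij0 hpn0] := EE_cases e0E.
pose tau := if pos e0.1 e0.2 then tp e0.1 e0.2 else tn e0.1 e0.2.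
pose sig := sR a1.
have tb : -1 <= tau <= 1 by rewrite /tau; case: ifP.
have [l0 l1 lt] := interp_ok (sR_pm a1) tb.
set l := (1 - sR a1 * tau) / 2 in l0 l1 lt.
exists l; split; first by rewrite l0 l1.
rewrite Zs_comb; apply: Zs_ext => i j ij h.
- have [eE el] := EE_pos c ij h.
  case: (eqVneq (i, j) e0) => [ee|ne].
  + have hp0 : pos e0.1 e0.2 by rewrite -ee.
    have [_ el1] := EE_pos W1 ij h; have [_ el2] := EE_pos W2 ij h.
    rewrite /cpw -el1 -el2 ee -/a1 -/a2 (sR_opp a10 a20 d0).
    by move: lt; rewrite /tau hp0 -ee /=.
  + have [s1 s2 s3] := lcs _ eE ne.
    have [_ el1] := EE_pos W1 ij h; have [_ el2] := EE_pos W2 ij h.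
    rewrite /cpw -el1 -el2 s1 s2 -mulrDl subrK mul1r el v1 //.
    by rewrite -el.
- have [eE el] := EE_neg c ij h.
  case: (eqVneq (i, j) e0) => [ee|ne].
  + have hn0 : pos e0.1 e0.2 = false.
      by rewrite -ee /=; apply/negP => hp; move: (pndis i j); rewrite hp h.
    have [_ el1] := EE_neg W1 ij h; have [_ el2] := EE_neg W2 ij h.
    rewrite /cnw -el1 -el2 ee -/a1 -/a2 (sR_opp a10 a20 d0).
    by move: lt; rewrite /tau hn0 -ee /=.
  + have [s1 s2 s3] := lcs _ eE ne.
    have [_ el1] := EE_neg W1 ij h; have [_ el2] := EE_neg W2 ij h.
    rewrite /cnw -el1 -el2 s1 s2 -mulrDl subrK mul1r el v2 //.
    by rewrite -el.
Qed.

Lemma main_sec s : signed_PEO pos neg s -> (2 <= #|EE|)%N ->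
  skeleton_hamiltonian (signed_zonotope (R := R) pos neg).
Proof.
move=> peo h2; have [L [cg cc cu ca cy cs cp]] := claim_PEO peo.
rewrite ES_setT in cs.
have nm : forall k, (k < size L)%N -> nth 0 (map point L) k = point (nthL L k).
  by move=> k hk; rewrite (nth_map (fun _ : 'I_n => 0 : R)).
exists (map point L); split.
- apply/(uniqP 0) => p q; rewrite !inE size_map => hp hq.
  rewrite !nm // => E; apply: cu => //; exact: point_inj (cg _ hp) E.
- by rewrite size_map; apply: leq_ltn_trans cs.
- move=> x; split.
  + move/vertex_char => [W gW ->]; have [i hi Di] := cc W gW.
    rewrite (DD0_point Di); apply/(nthP 0); exists i; rewrite ?size_map //.
    by rewrite nm.
  + case/(nthP 0) => i; rewrite size_map => hi <-; rewrite nm //.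
    exact/vertex_point/cg.
- move=> k; rewrite size_map => hk.
  have L0 : (0 < size L)%N by apply: leq_ltn_trans hk.
  have hk' : (k.+1 %% size L < size L)%N by rewrite ltn_pmod.
  rewrite !nm //; apply: edge_point; [exact: cg | exact: cg |].
  case: (ltnP k.+1 (size L)) => hk2.
  + by rewrite modn_small //; apply: ca.
  + have ek : k.+1 = size L by apply/eqP; rewrite eqn_leq hk hk2.
    have -> : k = (size L).-1 by rewrite -ek.
    rewrite -ek modnn ek; apply: cy; rewrite -ek; have := leq_ltn_trans h2 cs; lia.
Qed.
End Comb.
Theorem corollary1p3 (R : realType) (n : nat) (pos neg : rel 'I_n) :
  signed_graph pos neg ->
  (2 <= #|sg_edges pos neg|)%N ->
  (exists s : seq 'I_n, signed_PEO pos neg s) ->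
  skeleton_hamiltonian (signed_zonotope (R := R) pos neg).
Proof.
case=> ps ns pi ni pnd h2 [s peo].
exact: (main_sec R ps ns pnd peo h2).
Qed.
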